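(* Let $n\geq2$ be finite and let $\mathfrak A\in SA_n$. If $\mathfrak A$ is atomic and $\sum_{x\in\mathrm{At}\mathfrak A}s_\tau x=1$ for every $\tau\in{}^nn$, then $\mathfrak A$ is completely representable. Conversely, if $\mathfrak A$ is completely representable, then $\mathfrak A$ is atomic and $\sum_{x\in\mathrm{At}\mathfrak A}s_\tau x=1$ for every $\tau\in{}^nn$.
   Context: $SA_n=\mathbf{Mod}(\Sigma'_n)$, where $\Sigma'_n$ (signature $\wedge,-,s^i_j,s_{ij}$, $i\neq j<n$) consists of the Boolean axioms, equations saying each $s^i_j,s_{ij}$ is a Boolean endomorphism, and $t_1(x)=t_2(x)$ for all words $t_1,t_2$ with $\hat t_1=\hat t_2$ in ${}^nn$; here $\hat{}$ sends the empty word to $Id_n$, $(s_{ij}t)^{\hat{}}=[i,j]\circ\hat t$, $(s^i_jt)^{\hat{}}=[i/j]\circ\hat t$, with $[i,j]$ the transposition and $[i/j]$ the map sending $i$ to $j$ and fixing the rest. For $\tau\in{}^nn$, $s_\tau$ is the term operation $t$ for any word $t$ with $\hat t=\tau$. A set $D\subseteq{}^nU$ is dipermutable if $s\circ[i/j]\in D$ and $s\circ[i,j]\in D$ for all $s\in D$, $i\neq j$; $\wp(D)$ has operations $\cap$, complement relative to $D$, $S^i_j(X)=\{q\in D:q\circ[i/j]\in X\}$, $S_{ij}(X)=\{q\in D:q\circ[i,j]\in X\}$. $\mathfrak A$ is completely representable if there is an injective homomorphism $f:\mathfrak A\to\wp(D)$, $D$ dipermutable, with $f(\prod Y)=\bigcap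 f[Y]$ whenever $\prod Y$ exists. $\mathrm{At}\mathfrak A$ is the set of atoms. *)

(* Defs.v *)
(* Boolean algebras are complemented distributive lattices
   with top and bottom ([ctbDistrLatticeType]) from mathcomp-order. *)
From HB Require Import structures.
From mathcomp Require Import all_boot all_order.
From Stdlib Require Import ClassicalEpsilon.

Set Implicit Arguments.
Unset Strict Implicit.
Unset Printing Implicit Defensive.

Import Order.LTheory Order.CTheory.
Local Open Scope order_scope.

Section SA.
Variable n : nat.

Definition repl (i j : 'I_n) : 'I_n -> 'I_n :=
  fun k => if k == i then j else k.
Definition transp (i j : 'I_n) : 'I_n -> 'I_n :=
  fun k => if k == i then j else if k == j then i else k.

(* A letter is (b, i, j): b = true encodes s_{ij}, b = false encodes s^i_j. *)
Definition letter := (bool * 'I_n * 'I_n)%type.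
Definition word := seq letter.

Definition wf_word (t : word) : Prop :=
  forall l, l \in t -> l.1.2 != l.2.

Definition letter_map (l : letter) : 'I_n -> 'I_n :=
  let: (b, i, j) := l in if b then transp i j else repl i j.

Fixpoint hat (t : word) : 'I_n -> 'I_n :=
  match t with
  | [::] => id
  | l :: t' => fun k => letter_map l (hat t' k)
  end.

Variables (d : Order.disp_t) (T : ctbDistrLatticeType d).
Variables (sub : 'I_n -> 'I_n -> T -> T)
          (swp : 'I_n -> 'I_n -> T -> T).

Definition letter_op (l : letter) : T -> T :=
  let: (b, i, j) := l in if b then swp i j else sub i j.

Fixpoint eval_word (t : word) (x : T) : T :=
  match t with
  | [::] => x
  | l :: t' => letter_op l (eval_word t' x)
  end.

Definition bool_endo (f : T -> T) : Prop :=
  (forall x y, f (x `&` y) = f x `&` f y) /\ (forall x, f (~` x) = ~` f x).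

(* Membership in SA_n = Mod(Sigma'_n) (Boolean axioms are given by T). *)
Definition SA_axioms : Prop :=
  (forall i j : 'I_n, i != j -> bool_endo (sub i j) /\ bool_endo (swp i j)) /\
  (forall t1 t2 : word, wf_word t1 -> wf_word t2 -> hat t1 =1 hat t2 ->
     forall x, eval_word t1 x = eval_word t2 x).

Definition word_for (tau : 'I_n -> 'I_n) : word :=
  epsilon (inhabits [::]) (fun t => wf_word t /\ hat t =1 tau).
Definition s_tau (tau : 'I_n -> 'I_n) (x : T) : T := eval_word (word_for tau) x.

Definition is_lub (X : T -> Prop) (a : T) : Prop :=
  (forall x, X x -> x <= a) /\ (forall b, (forall x, X x -> x <= b) -> a <= b).
Definition is_glb (X : T -> Prop) (a : T) : Prop :=
  (forall x, X x -> a <= x) /\ (forall b, (forall x, X x -> b <= x) -> b <= a).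

Definition atom (x : T) : Prop :=
  x != \bot /\ forall y, y <= x -> y = \bot \/ y = x.
Definition atomic : Prop :=
  forall x, x != \bot -> exists a, atom a /\ a <= x.

Definition atoms_sum_one (tau : 'I_n -> 'I_n) : Prop :=
  is_lub (fun y => exists x, atom x /\ y = s_tau tau x) \top.

Definition dipermutable (U : Type) (D : ('I_n -> U) -> Prop) : Prop :=
  forall s, D s -> forall i j : 'I_n, i != j ->
    D (fun k => s (repl i j k)) /\ D (fun k => s (transp i j k)).

(* f : A -> wp(D) is an injective homomorphism preserving all existing meets *)
Definition complete_rep (U : Type) (D : ('I_n -> U) -> Prop)
  (f : T -> ('I_n -> U) -> Prop) : Prop :=
  (forall x q, f x q -> D q) /\
  (forall x y q, f (x `&` y) q <-> f x q /\ f y q) /\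
  (forall x q, f (~` x) q <-> D q /\ ~ f x q) /\
  (forall i j : 'I_n, i != j -> forall x q,
      f (sub i j x) q <-> D q /\ f x (fun k => q (repl i j k))) /\
  (forall i j : 'I_n, i != j -> forall x q,
      f (swp i j x) q <-> D q /\ f x (fun k => q (transp i j k))) /\
  (forall x y, (forall q, f x q <-> f y q) -> x = y) /\
  (forall (Y : T -> Prop) p, is_glb Y p ->
      forall q, f p q <-> D q /\ (forall y, Y y -> f y q)).

Definition completely_representable : Prop :=
  exists (U : Type) (D : ('I_n -> U) -> Prop) (f : T -> ('I_n -> U) -> Prop),
    dipermutable D /\ complete_rep D f.

End SA.

(* Main.v *)
Require Import Defs.
From HB Require Import structures.
From mathcomp Require Import all_boot all_order all_fingroup.
From mathcomp Require Import zify.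
From Stdlib Require Import ClassicalEpsilon.
Set Implicit Arguments. Unset Strict Implicit. Unset Printing Implicit Defensive.

Section Gen.
Variable n : nat.

Lemma hat_cat (t1 t2 : word n) k : hat (t1 ++ t2) k = hat t1 (hat t2 k).
Proof. by elim: t1 => //= l t IH; rewrite IH. Qed.

Lemma wf_cat (t1 t2 : word n) : wf_word t1 -> wf_word t2 -> wf_word (t1 ++ t2).
Proof. by move=> h1 h2 l; rewrite mem_cat => /orP[/h1|/h2]. Qed.

Definition realizable (tau : 'I_n -> 'I_n) := exists t : word n, wf_word t /\ hat t =1 tau.

Lemma real_perm (ts : seq ('I_n * 'I_n)) : all dpair ts ->
  realizable (fun k => (\prod_(t <- ts) tperm t.1 t.2)%g k).
Proof.
elim: ts => [|[a b] ts IH] /=.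
  by move=> _; exists [::]; split => // k; rewrite big_nil perm1.
move=> /andP[hab /IH [w [hw hh]]].
exists (w ++ [:: (true, a, b)]); split.
  apply: wf_cat => // l; rewrite inE => /eqP -> //.
move=> k; rewrite hat_cat big_cons permM hh /=; congr (_ _).
rewrite /transp; case: tpermP => [->|->|/eqP h1 /eqP h2]; rewrite ?eqxx //.
  by rewrite eq_sym (negbTE hab).
by rewrite (negbTE h1) (negbTE h2).
Qed.

Lemma real_inj (tau : 'I_n -> 'I_n) : injective tau -> realizable tau.
Proof.
move=> inj; have [ts hp hd] := prod_tpermP (perm inj).
have [w [hw hh]] := real_perm hd; exists w; split => // k.
by rewrite hh -hp permE.
Qed.

Lemma noninj_lt (tau : 'I_n -> 'I_n) : ~~ injectiveb tau -> #|codom tau| < n.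
Proof.
move=> hni; have := max_card (mem (codom tau)); rewrite card_ord leq_eqVlt => /orP[/eqP hc|//].
case/negP: hni; apply/injectiveP => x y.
have /image_injP hi : #|image tau 'I_n| == #|'I_n|.
  by apply/eqP; rewrite [#|'I_n|]card_ord; exact: hc.
by apply: hi.
Qed.

Lemma real_all_aux m (tau : 'I_n -> 'I_n) : n - #|codom tau| <= m -> realizable tau.
Proof.
elim: m tau => [|m IH] tau hm; case: (boolP (injectiveb tau)) => [/injectiveP|]; try exact: real_inj.
all: move=> hni.
all: have hlt := noninj_lt hni.
  lia.
have [v _ hv] : exists2 v, v \in 'I_n & v \notin codom tau.
  apply/subsetPn; apply: contraL hlt => /subset_leq_card.
  by rewrite card_ord -leqNgt.
have [i [j hij heq]] := injectivePn _ hni.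
pose tau' := fun k => if k == i then v else tau k.
have hprop : [pred x in codom tau] \proper [pred x in codom tau'].
  apply/properP; split.
    apply/subsetP => x; rewrite !inE => /codomP [k ->].
    apply/codomP; case: (eqVneq k i) => [->|hk].
      by exists j; rewrite /tau' eq_sym (negbTE hij) heq.
    by exists k; rewrite /tau' (negbTE hk).
  exists v; rewrite !inE //; apply/codomP; exists i; by rewrite /tau' eqxx.
have hc := proper_card hprop.
have hle : #|[pred x in codom tau']| <= n by have := max_card [pred x in codom tau']; rewrite card_ord.
have [w [hw hh]] : realizable tau'.
  apply: IH. move: hc hle hm; rewrite !cardE /=. lia.
have hvi : v != tau i by apply: contra hv => /eqP ->; apply/codomP; exists i.
exists ((false, v, tau i) :: w); split.
  by move=> l; rewrite inE => /orP[/eqP -> //|/hw].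
move=> k /=; rewrite hh /repl /tau'; case: (eqVneq k i) => [->|hk]; rewrite ?eqxx //.
case: eqP => // h; case/negP: hv; apply/codomP; by exists k.
Qed.
End Gen.

Lemma real_all n (tau : 'I_n -> 'I_n) : realizable tau.
Proof. by apply: (@real_all_aux n n); rewrite leq_subr. Qed.

Lemma word_for_spec n (tau : 'I_n -> 'I_n) :
  wf_word (word_for tau) /\ hat (word_for tau) =1 tau.
Proof.
rewrite /word_for; apply: (epsilon_spec (inhabits [::]) (fun t : word n => wf_word t /\ hat t =1 tau)); have [t h] := real_all tau; by exists t.
Qed.

Section Main.
Import Order.LTheory Order.CTheory.
Local Open Scope order_scope.
Variables (n : nat) (d : Order.disp_t) (T : ctbDistrLatticeType d).
Variables (sub swp : 'I_n -> 'I_n -> T -> T).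
Hypothesis hSA : SA_axioms sub swp.

Lemma eval_cat (t1 t2 : word n) x :
  eval_word sub swp (t1 ++ t2) x = eval_word sub swp t1 (eval_word sub swp t2 x).
Proof. by elim: t1 => //= l t IH; rewrite IH. Qed.

Lemma be_mono f : bool_endo f -> forall x y : T, x <= y -> f x <= f y.
Proof. move=> [hm _] x y /meet_idPl h; by rewrite -h hm leIr. Qed.

Lemma eval_be (t : word n) : wf_word t -> bool_endo (eval_word sub swp t).
Proof.
elim: t => [|[[b i] j] t IH] hw; first by split.
have hij : i != j by exact: (hw (b, i, j) (mem_head _ _)).
have [he1 he2] := hSA.1 i j hij.
have [h1 h2] : bool_endo (eval_word sub swp t) by apply: IH => l hl; apply: hw; rewrite inE hl orbT.
by move: he1 he2 => [g1 g2] [g3 g4]; case: b {hw}; split => /= *; rewrite ?h1 ?h2 ?g1 ?g2 ?g3 ?g4.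
Qed.

Lemma stau_be tau : bool_endo (s_tau sub swp tau).
Proof. exact: eval_be (word_for_spec tau).1. Qed.

Lemma stau_ext tau1 tau2 : tau1 =1 tau2 -> forall x, s_tau sub swp tau1 x = s_tau sub swp tau2 x.
Proof.
move=> h x; apply: hSA.2; try exact: (word_for_spec _).1.
by move=> k; rewrite (word_for_spec _).2 (word_for_spec _).2.
Qed.

Lemma stau_id x : s_tau sub swp id x = x.
Proof.
have -> : x = eval_word sub swp [::] x by [].
apply: hSA.2 => //; first exact: (word_for_spec _).1.
exact: (word_for_spec _).2.
Qed.

Lemma stau_letter tau (l : letter n) x : l.1.2 != l.2 ->
  s_tau sub swp tau (letter_op sub swp l x) = s_tau sub swp (fun k => tau (letter_map l k)) x.
Proof.
move=> hl; rewrite /s_tau.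
have -> : letter_op sub swp l x = eval_word sub swp [:: l] x by [].
rewrite -eval_cat; apply: hSA.2.
- apply: wf_cat; first exact: (word_for_spec _).1.
  by move=> l'; rewrite inE => /eqP ->.
- exact: (word_for_spec _).1.
- by move=> k; rewrite hat_cat /= !(word_for_spec _).2.
Qed.

Lemma atomC (a y : T) : atom a -> (a <= ~` y) = ~~ (a <= y).
Proof.
move=> [ha0 ha]; apply/idP/idP.
  move=> h1; apply/negP => h2; case/negP: ha0.
  by rewrite -lex0 -(meetxC y) lexI h1 h2.
move=> h; rewrite -disj_leC; case: (ha (a `&` y) (leIl _ _)) => [->//|e].
by case/negP: h; rewrite -e leIr.
Qed.

Lemma atom_meet (a x y : T) : atom a -> (a <= x `&` y) = (a <= x) && (a <= y).
Proof. by rewrite lexI. Qed.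

Lemma key_atom (a : T) tau : atom a -> atoms_sum_one sub swp tau ->
  exists b, atom b /\ forall x, a <= s_tau sub swp tau x <-> b <= x.
Proof.
move=> ha [_ hlub].
have [b [hb hab]] : exists b, atom b /\ a <= s_tau sub swp tau b.
  apply: NNPP => hne; have : \top <= ~` a.
    apply: hlub => y [b [hb ->]]; rewrite -lexC atomC //.
    by apply/negP => hab; apply: hne; exists b.
  move=> /(le_trans (lex1 a)); rewrite atomC // lexx //.
exists b; split => // x; split => [h|h]; last first.
  exact: le_trans hab (be_mono (stau_be tau) h).
apply: contraLR h; rewrite -atomC // => /(be_mono (stau_be tau)) hbx.
have := le_trans hab hbx; rewrite (stau_be tau).2 atomC //.
Qed.

Section Fwd.
Variable i0 : 'I_n.
Definition Dq (q : 'I_n -> T * 'I_n) : Prop :=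
  atom (q i0).1 /\ forall k, (q k).1 = (q i0).1.
Definition fq (x : T) (q : 'I_n -> T * 'I_n) : Prop :=
  Dq q /\ (q i0).1 <= s_tau sub swp (fun k => (q k).2) x.

Lemma Dq_perm (g : 'I_n -> 'I_n) q : Dq q -> Dq (fun k => q (g k)) /\ (q (g i0)).1 = (q i0).1.
Proof. by move=> [h1 h2]; rewrite /Dq h2; split => //; split => // k; rewrite !h2. Qed.

Lemma fwd : atomic T -> (forall tau, atoms_sum_one sub swp tau) ->
  dipermutable Dq /\ complete_rep sub swp Dq fq.
Proof.
move=> hatm hsum; split.
  by move=> q hq i j _; split; apply: (Dq_perm _ hq).1.
split; first by move=> x q [].
split.
  move=> x y q; rewrite /fq (stau_be _).1 lexI; split.
    by move=> [h /andP[]]. by move=> [[h1 h2] [_ h3]]; rewrite h2 h3.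
split.
  move=> x q; rewrite /fq (stau_be _).2; split.
    by move=> [hq h]; split => // -[_]; rewrite atomC in h => //; [apply/negP|case: hq].
  move=> [hq h]; split => //; rewrite atomC; last by case: hq.
  by apply/negP => h'; apply: h.
split.
  move=> i j hij x q; rewrite /fq.
  rewrite (@stau_letter (fun k => (q k).2) (false, i, j) x) //; split.
    by move=> [hq h]; have [h1 h2] := Dq_perm (repl i j) hq; rewrite h2.
  by move=> [hq [hq' h]]; have [h1 h2] := Dq_perm (repl i j) hq; rewrite -h2.
split.
  move=> i j hij x q; rewrite /fq.
  rewrite (@stau_letter (fun k => (q k).2) (true, i, j) x) //; split.
    by move=> [hq h]; have [h1 h2] := Dq_perm (transp i j) hq; rewrite h2.
  by move=> [hq [hq' h]]; have [h1 h2] := Dq_perm (transp i j) hq; rewrite -h2.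
split.
  have hle : forall x y, (forall q, fq x q <-> fq y q) -> x <= y.
    move=> x y hxy; apply: NNPP => hn.
    have hne : x `&` ~` y != \bot.
      by apply/negP => /eqP h0; apply: hn; rewrite -[y]complK -disj_leC h0.
    have [a [ha hax]] := hatm _ hne.
    pose q := fun k : 'I_n => (a, k).
    have hq : Dq q by [].
    have := (hxy q).1; rewrite /fq /= !stau_id => h.
    move: hax; rewrite lexI atomC // => /andP [h1 /negP]; apply.
    by case: (h (conj hq h1)).
  move=> x y hxy; apply: le_anti; rewrite !hle //.
  by move=> q; split => /hxy.
move=> Y p [hlb hglb] q; rewrite /fq; split.
  move=> [hq h]; split => // y hy; split => //.
  exact: le_trans h (be_mono (stau_be _) (hlb y hy)).
move=> [hq hall]; split => //.
have [b [hb hbx]] := @key_atom (q i0).1 (fun k => (q k).2) hq.1 (hsum _).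
apply/hbx; apply: hglb => y hy; apply/hbx; by case: (hall y hy).
Qed.
End Fwd.

Section Conv.
Variables (U : Type) (D : ('I_n -> U) -> Prop) (f : T -> ('I_n -> U) -> Prop).
Hypothesis hdp : dipermutable D.
Hypothesis hcr : complete_rep sub swp D f.

Lemma f_D x q : f x q -> D q. Proof. by case: hcr => h _; apply: h. Qed.
Lemma f_I x y q : f (x `&` y) q <-> f x q /\ f y q. Proof. by case: hcr => _ [h _]. Qed.
Lemma f_C x q : f (~` x) q <-> D q /\ ~ f x q. Proof. by case: hcr => _ [_ [h _]]. Qed.
Lemma f_inj x y : (forall q, f x q <-> f y q) -> x = y.
Proof. by case: hcr => _ [_ [_ [_ [_ [h _]]]]]; apply: h. Qed.
Lemma f_glb Y p : is_glb Y p -> forall q, f p q <-> D q /\ (forall y, Y y -> f y q).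
Proof. by case: hcr => _ [_ [_ [_ [_ [_ h]]]]]; apply: h. Qed.
Lemma f_let (l : letter n) x q : l.1.2 != l.2 ->
  f (letter_op sub swp l x) q <-> D q /\ f x (fun k => q (letter_map l k)).
Proof.
case: l => [[b i] j] /= hij; case: hcr => _ [_ [_ [hs [hw _]]]].
by case: b; [apply: hw|apply: hs].
Qed.

Lemma f_bot q : ~ f \bot q.
Proof.
move=> h; have : f (\bot `&` ~` \bot) q by rewrite meet0x.
by move/f_I => [_ /f_C [_]].
Qed.

Lemma f_mono y z q : y <= z -> f y q -> f z q.
Proof. by move=> /meet_idPl h; rewrite -h => /f_I []. Qed.

Lemma f_top q : D q -> f \top q.
Proof. by move=> hq; rewrite -compl0; apply/f_C; split => //; apply: f_bot. Qed.

Lemma eval_rep (t : word n) x q : wf_word t ->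
  f (eval_word sub swp t x) q <-> D q /\ f x (fun k => q (hat t k)).
Proof.
elim: t q => [|l t IH] q hw /=.
  by split => [h|[]//]; split => //; apply: f_D h.
have hl : l.1.2 != l.2 by apply: hw; apply: mem_head.
have hw' : wf_word t by move=> l' hl'; apply: hw; rewrite inE hl' orbT.
rewrite f_let // IH //; split; first by move=> [? []].
move=> [hq h]; do !split => //.
by case: l hl {hw} h => [[b i] j] /= hij h; have [h1 h2] := hdp hq hij; case: b h.
Qed.

Lemma conv_atomic : atomic T.
Proof.
move=> x hx.
have [q hq] : exists q, f x q.
  apply: NNPP => hn; case/negP: hx; apply/eqP; apply: f_inj => q; split => h.
    by case: hn; exists q. by case: (f_bot h).
apply: NNPP => hna.
have hnoat : forall c, c <= x -> ~ atom c.
  by move=> c hc hac; apply: hna; exists c.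
pose Y := fun w => exists z, z <= x /\ ~ f z q /\ w = ~` z.
have hY : is_glb Y (~` x).
  split; first by move=> w [z [hz [_ ->]]]; rewrite leC.
  move=> b hb; rewrite lexC.
  have hc0 : x `&` b = \bot.
    apply: NNPP => hc; set c := x `&` b in hc.
    have hcx : c <= x by apply: leIl.
    have hcb : c <= b by apply: leIr.
    have [y [hyc hy]] : exists y, y <= c /\ y != \bot /\ y != c.
      apply: NNPP => hn; apply: (hnoat c hcx); split; first by apply/eqP.
      move=> y hy; case: (eqVneq y \bot) => [->|h1]; first by left.
      case: (eqVneq y c) => [->|h2]; first by right.
      by case: hn; exists y.
    case: hy => hy0 hyc'.
    have hsplit : forall z, z <= c -> z != \bot -> f z q.
      move=> z hz hz0; apply: NNPP => hnz.
      have : b <= ~` z by apply: hb; exists z; split => //; exact: le_trans hz hcx.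
      move=> hbz; case/negP: hz0; rewrite -lex0 -(meetxC z) lexI lexx /=.
      exact: le_trans hz (le_trans hcb hbz).
    have h1 := hsplit y hyc hy0.
    have h2 : f (c `&` ~` y) q.
      apply: hsplit; first exact: leIl.
      apply/negP => /eqP e; case/negP: hyc'; rewrite eq_le hyc /=.
      by rewrite -[y]complK -disj_leC e.
    have : f (y `&` (c `&` ~` y)) q by apply/f_I.
    by rewrite meetCA meetxC meetx0 => /f_bot.
  by rewrite -disj_leC hc0.
have hfx : f (~` x) q.
  apply/(f_glb hY q); split; first exact: f_D hq.
  move=> w [z [_ [hz ->]]]; apply/f_C; split => //; exact: f_D hq.
by move/f_C: hfx => [_]; apply.
Qed.

Lemma D_hat (t : word n) q : wf_word t -> D q -> D (fun k => q (hat t k)).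
Proof.
elim: t q => [|l t IH] q hw hq //=.
have hl : l.1.2 != l.2 by apply: hw; apply: mem_head.
have hw' : wf_word t by move=> l' hl'; apply: hw; rewrite inE hl' orbT.
apply: (IH (fun k => q (letter_map l k))) => //.
by case: l hl {hw} => [[b i] j] /= hij; have [h1 h2] := hdp hq hij; case: b.
Qed.

Lemma conv_sum tau : atoms_sum_one sub swp tau.
Proof.
split; first by move=> y _; apply: lex1.
move=> b hb.
suff -> : b = \top by [].
apply: f_inj => q; split; first by move=> h; apply: f_top; apply: f_D h.
move=> /f_D hq.
have [hw hh] := word_for_spec tau.
set q' := fun k => q (hat (word_for tau) k).
have hq' : D q' by apply: D_hat.
have hG : is_glb (fun w : T => exists a : T, atom a /\ w = ~` a) (\bot : T).
  split; first by move=> *; apply: le0x.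
  move=> b' hb'; apply: NNPP => hn.
  have hb0 : b' != \bot by apply/negP => /eqP e; apply: hn; rewrite e.
  have [a [ha hab]] := conv_atomic hb0.
  have := le_trans hab (hb' _ (ex_intro _ a (conj ha erefl))).
  by rewrite atomC // lexx.
have [a [ha hfa]] : exists a, atom a /\ f a q'.
  apply: NNPP => hn; apply: (@f_bot q'); apply/(f_glb hG q'); split => //.
  move=> w [a [ha ->]]; apply/f_C; split => // hfa; apply: hn; by exists a.
apply: (f_mono (hb _ (ex_intro _ a (conj ha erefl)))).
by apply/eval_rep.
Qed.
End Conv.
End Main.

Theorem mainTheorem11 (n : nat) (hn : 2 <= n) (d : Order.disp_t)
  (T : ctbDistrLatticeType d) (sub swp : 'I_n -> 'I_n -> T -> T)
  (hSA : SA_axioms sub swp) :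
  ((atomic T /\ forall tau : 'I_n -> 'I_n, atoms_sum_one sub swp tau) ->
     completely_representable sub swp) /\
  (completely_representable sub swp ->
     atomic T /\ forall tau : 'I_n -> 'I_n, atoms_sum_one sub swp tau).
Proof.
split.
  move=> [ha hs]; have i0 : 'I_n := Ordinal (ltnW hn).
  exists (T * 'I_n)%type, (Dq i0), (fq sub swp i0).
  exact: fwd.
move=> [U [D [f [hdp hcr]]]]; split.
  exact: conv_atomic hcr.
move=> tau; exact: conv_sum hdp hcr tau.
Qed.
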